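(* Let $S$ be a finite set of states, $B\subseteq S$ a set of accepting states, and $P_\pi : S\times S\to[0,1]$ the (row-stochastic) transition matrix of the Markov chain induced on $S$ by a fixed memoryless policy $\pi$. Fix discount factors $0<\gamma_B<\gamma\le 1$ and define the surrogate reward $R(s)=1-\gamma_B$ and discount $\Gamma(s)=\gamma_B$ for $s\in B$, and $R(s)=0$, $\Gamma(s)=\gamma$ for $s\notin B$. For a path $\sigma=s_0s_1s_2\cdots$ of the chain let $G_t(\sigma)=\lim_{K\to\infty}\sum_{i=0}^{K}R(\sigma[t+i])\prod_{j=0}^{i-1}\Gamma(\sigma[t+j])$, and let $V(s)=\mathbb{E}[G_t(\sigma)\mid \sigma[t]=s]$ be the value function. Define iterates $U_{(k)}\in\mathbb{R}^S$ by $U_{(0)}=0$ and $$U_{(k+1)}(s)=R(s)+\Gamma(s)\sum_{s'\in S}P_\pi(s,s')\,U_{(k)}(s'),\qquad s\in S .$$ Then $U_{(k)}$ converges to $V$, and: (i) if $\gamma<1$, then $\|U_{(k)}-V\|_\infty\le \gamma^k\|V\|_\infty$ for all $k\ge 0$; (ii) if $\gamma=1$, then $\|U_{(k)}-V\|_\infty\le \big(1-(1-\gamma_B)\varepsilon^{n'}\big)^{\lfloor k/(n'+1)\rfloor}\|V\|_\infty$ for all $k\ge 0$, where $\varepsilon>0$ is any number with $P_\pi(s,s')\ge\varepsilon$ for all pairs $(s,s')$ with $P_\pi(s,s')>0$, and $n'=|\neg B_{T,A}|$ is the number of states that are not in $B$ and do not belong to any rejecting bottom strongly connected component.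
   Context: A strongly connected component (communicating class) of a finite Markov chain is a maximal set of states that all communicate with each other; a bottom strongly connected component (BSCC) is one with no transitions leaving it. A BSCC is called rejecting if it contains no state of $B$, and accepting otherwise. Let $\neg B_R$ denote the set of all states lying in rejecting BSCCs of the chain with transition matrix $P_\pi$, and $\neg B_{T,A}=S\setminus(B\cup\neg B_R)$. The setting arises from a Markov decision process with Büchi objective (visit $B$ infinitely often) under a fixed memoryless policy $\pi$, with $P_\pi(s,s')=P(s,\pi(s),s')$. *)

(* Defs.v *)
From HB Require Import structures.
From mathcomp Require Import all_boot all_order all_algebra.
From mathcomp Require Import all_classical all_reals all_analysis.
Set Implicit Arguments. Unset Strict Implicit. Unset Printing Implicit Defensive.
Import Order.TTheory GRing.Theory Num.Theory numFieldNormedType.Exports.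
Local Open Scope ring_scope. Local Open Scope classical_set_scope.

Section Surrogate.
Variables (R : realType) (S : finType) (P : S -> S -> R) (B : {set S}) (gB g : R).

Definition Rw (s : S) : R := if s \in B then 1 - gB else 0.
Definition Gam (s : S) : R := if s \in B then gB else g.

Fixpoint pathprob (s : S) (p : seq S) : R :=
  match p with [::] => 1 | x :: p' => P s x * pathprob x p' end.

(* truncated return  sum_{i=0}^{K} R(sigma_i) prod_{j<i} Gamma(sigma_j)
   of the path sigma = s :: p, K = size p *)
Fixpoint tret (s : S) (p : seq S) : R :=
  Rw s + Gam s * (match p with [::] => 0 | x :: p' => tret x p' end).

Definition exp_tret (K : nat) (s : S) : R :=
  \sum_(p : K.-tuple S) pathprob s p * tret s p.

Definition Vfun (s : S) : R := lim (exp_tret n s @[n --> \oo])%classic.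

Fixpoint Uit (k : nat) : S -> R :=
  match k with
  | 0 => fun _ => 0
  | k'.+1 => fun s => Rw s + Gam s * \sum_(s' : S) P s s' * Uit k' s'
  end.

Definition supnorm (x : S -> R) : R := \big[Num.max/0]_(s : S) `|x s|.

Definition edge : rel S := fun x y => 0 < P x y.

Definition comm_class (s : S) : {set S} :=
  [set t | connect edge s t && connect edge t s].

Definition closedb (C : {set S}) : bool :=
  [forall t in C, forall u, edge t u ==> (u \in C)].

(* states lying in rejecting bottom strongly connected components *)
Definition negB_R : {set S} :=
  [set s | [exists s0, [&& s \in comm_class s0, closedb (comm_class s0)
                          & [disjoint comm_class s0 & B]]]].

Definition negB_TA : {set S} := ~: (B :|: negB_R).

End Surrogate.

(* Main.v *)
Require Import Defs.
From HB Require Import structures.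
From mathcomp Require Import all_boot all_order all_algebra.
From mathcomp Require Import all_classical all_reals all_analysis.
Import Order.TTheory GRing.Theory Num.Theory numFieldNormedType.Exports.
From mathcomp Require Import ring lra.
Local Open Scope ring_scope.

Section Graph.
Set Implicit Arguments. Unset Strict Implicit.
Variables (R : realType) (S : finType) (P : S -> S -> R) (B : {set S}).

Definition W : {set S} := B :|: negB_R P B.
Definition edge' : rel S := fun x y => edge P x y && (x \notin W).

Lemma negBR_closed s t : s \in negB_R P B -> 0 < P s t -> t \in negB_R P B.
Proof.
rewrite !inE => /existsP[s0 /and3P[hs hc hd]] hst.
apply/existsP; exists s0; rewrite hc hd andbT.
move/forall_inP: hc => /(_ s hs)/forallP/(_ t)/implyP.
by rewrite andbT; apply.
Qed.

Lemma negBR_notB s : s \in negB_R P B -> s \notin B.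
Proof.
rewrite inE => /existsP[s0 /and3P[hs _ hd]].
by rewrite (disjointFr hd hs).
Qed.

Lemma reach_W s : exists2 w, w \in W & connect edge' s w.
Proof.
pose Re t := [set u | connect edge' t u].
case: (arg_minnP (fun t => #|Re t|) (connect0 edge' s)) => t st tmin.
case: (boolP [exists u, connect edge' t u && (u \in W)]).
  case/existsP=> u /andP[tu uW]; exists u => //; exact: connect_trans st tu.
move/existsPn=> noW.
have tnW u : connect edge' t u -> u \notin W.
  by move=> tu; move: (noW u); rewrite tu.
have back u : connect edge' t u -> connect edge' u t.
  move=> tu.
  have sub : Re u \subset Re t.
    by apply/fintype.subsetP => v; rewrite !inE => uv; exact: connect_trans tu uv.
  have le1 : (#|Re t| <= #|Re u|)%N by apply: tmin; exact: connect_trans st tu.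
  have eqc : #|Re u| = #|Re t|.
    by apply/eqP; rewrite eqn_leq le1 subset_leq_card.
  have := (subset_cardP eqc) sub => /(_ t).
  by rewrite !inE connect0 => ->.
have fwdg : forall p x, connect edge' t x -> path (edge P) x p ->
    connect edge' t (last x p).
  elim=> [|y p IH] x tx //= /andP[xy pth].
  have xW := tnW x tx; apply: (IH y _ pth).
  apply: connect_trans tx (connect1 _).
  by rewrite /edge' xy xW.
have fwd u : connect (edge P) t u -> connect edge' t u.
  by move/connectP=> [p pth ->]; exact: fwdg (connect0 _ _) pth.
have sub' x y : connect edge' x y -> connect (edge P) x y.
  by apply: connect_sub => a b /andP[ab _]; exact: connect1.
have tR : t \in negB_R P B.
  rewrite inE; apply/existsP; exists t; apply/and3P; split.
  - by rewrite inE connect0.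
  - apply/forall_inP => v; rewrite inE => /andP[tv vt].
    apply/forallP => w; apply/implyP => vw.
    have tw : connect (edge P) t w by apply: connect_trans tv (connect1 vw).
    by rewrite inE tw /= sub' // back // fwd.
  - rewrite disjoint_subset; apply/fintype.subsetP => v; rewrite inE => /andP[tv _].
    have := tnW v (fwd v tv); rewrite !inE.
    by case: (v \in B).
by have := tnW t (connect0 _ _); rewrite inE tR orbT.
Qed.

Fixpoint rw (j : nat) (s : S) : Prop :=
  match j with
  | 0 => s \in W
  | j'.+1 => s \in W \/ exists2 t, 0 < P s t & rw j' t
  end.

Lemma rw_W j s : s \in W -> rw j s.
Proof. by case: j => [|j] //= h; left. Qed.

Lemma rw_mono j j' s : (j <= j')%N -> rw j s -> rw j' s.
Proof.
elim: j j' s => [|j IH] [|j'] s //= hj.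
- by move=> h; left.
- case=> [h|[t st rt]]; first by left.
  by right; exists t => //; exact: IH rt.
Qed.

Lemma rw_path x p : path edge' x p -> last x p \in W -> rw (size p) x.
Proof.
elim: p x => [|y p IH] x //= /andP[/andP[xy _] pth] hl.
by right; exists y => //; exact: IH.
Qed.

Lemma belast_notW x p : path edge' x p -> {in belast x p, forall z, z \notin W}.
Proof.
elim: p x => [|y p IH] x //= /andP[/andP[_ xW] pth] z.
by rewrite inE => /orP[/eqP -> //|]; exact: IH.
Qed.

Lemma rw_all s : rw #|negB_TA P B| s.
Proof.
case: (reach_W s) => w wW /connectP[p pth ewp].
rewrite ewp in wW; case: (shortenP pth) wW => p' pth' up _ wW.
have hsz : (size p' <= #|negB_TA P B|)%N.
  rewrite -(size_belast s) cardE; apply: uniq_leq_size.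
    by move: up; rewrite lastI rcons_uniq => /andP[].
  move=> z /(belast_notW pth') zW.
  by rewrite mem_enum /negB_TA inE.
apply: rw_mono hsz _; exact: rw_path pth' wW.
Qed.
Unset Implicit Arguments.
End Graph.

Local Open Scope classical_set_scope.
Section Aux.
Variables (R : realType) (S : finType) (P : S -> S -> R) (B : {set S}) (gB g : R).
Hypothesis P0 : forall s s', 0 <= P s s'.
Hypothesis Psum : forall s, \sum_(s' : S) P s s' = 1.
Hypothesis gB0 : 0 < gB.
Hypothesis gBg : gB < g.
Hypothesis g1 : g <= 1.

Local Notation Rw := (Rw B gB).
Local Notation Gam := (Gam B gB g).
Local Notation U := (Uit P B gB g).

Lemma gB1 : gB < 1. Proof. exact: lt_le_trans gBg g1. Qed.
Lemma Rw_ge0 s : 0 <= Rw s.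
Proof. rewrite /Defs.Rw; case: ifP => // _; rewrite subr_ge0 ltW //; exact: gB1. Qed.
Lemma Gam_ge0 s : 0 <= Gam s.
Proof. rewrite /Defs.Gam; case: ifP => _; apply: ltW => //; exact: lt_trans gBg. Qed.
Lemma Gam_le_g s : Gam s <= g.
Proof. rewrite /Defs.Gam; case: ifP => _ //; exact: ltW. Qed.
Lemma Gam_le1 s : Gam s <= 1.
Proof. exact: le_trans (Gam_le_g s) g1. Qed.

Lemma U_ge0 k s : 0 <= U k s.
Proof.
elim: k s => [|k IH] s /=; first by [].
apply: addr_ge0; first exact: Rw_ge0.
apply: mulr_ge0; first exact: Gam_ge0.
by apply: sumr_ge0 => t _; apply: mulr_ge0.
Qed.

Lemma U_le1 k s : U k s <= 1.
Proof.
elim: k s => [|k IH] s /=; first by [].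
have H : \sum_(t : S) P s t * U k t <= 1.
  rewrite -(Psum s); apply: ler_sum => t _.
  by rewrite -[leRHS]mulr1 ler_wpM2l.
apply: le_trans (_ : Rw s + Gam s * 1 <= 1).
  by rewrite lerD2l ler_wpM2l // Gam_ge0.
rewrite mulr1 /Defs.Rw /Defs.Gam; case: ifP => _; first by rewrite subrK.
by rewrite add0r.
Qed.

Lemma U_mono k s : U k s <= U k.+1 s.
Proof.
elim: k s => [|k IH] s.
  rewrite /=; apply: addr_ge0; first exact: Rw_ge0.
  by rewrite big1 ?mulr0 // => t _; rewrite mulr0.
rewrite [U k.+1 s]/= [U k.+2 s]/= lerD2l ler_wpM2l ?Gam_ge0 //.
by apply: ler_sum => t _; rewrite ler_wpM2l.
Qed.

Lemma sum_tuple0 (f : seq S -> R) :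
  \sum_(p : 0.-tuple S) f p = f [::].
Proof.
rewrite (eq_bigr (fun _ => f [::])) => [|p _]; last by rewrite tuple0.
by rewrite sumr_const card_tuple expn0.
Qed.

Lemma sum_tupleS K (f : seq S -> R) :
  \sum_(p : K.+1.-tuple S) f p = \sum_(x : S) \sum_(p : K.-tuple S) f (x :: p).
Proof.
rewrite pair_big /=.
rewrite (reindex (fun xp : S * K.-tuple S => [tuple of xp.1 :: xp.2])) /=.
  by apply: eq_bigr.
apply: onW_bij; exists (fun t : K.+1.-tuple S => (thead t, [tuple of behead t])).
  by case=> x p /=; congr pair; apply: val_inj.
by move=> t /=; rewrite [RHS]tuple_eta; apply: val_inj.
Qed.

Lemma sum_pathprob K s : \sum_(p : K.-tuple S) pathprob P s p = 1.
Proof.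
elim: K s => [|K IH] s; first by rewrite (sum_tuple0 (pathprob P s)).
rewrite (sum_tupleS K (pathprob P s)) /= -(Psum s); apply: eq_bigr => x _.
by rewrite -mulr_sumr IH mulr1.
Qed.

Lemma exp_tretE K s : exp_tret P B gB g K s = U K.+1 s.
Proof.
rewrite /exp_tret.
elim: K s => [|K IH] s.
  rewrite (sum_tuple0 (fun p => pathprob P s p * tret B gB g s p)) /=.
  by rewrite mul1r !big1 ?mulr0 // => t _; rewrite mulr0.
rewrite (sum_tupleS K (fun p => pathprob P s p * tret B gB g s p)) /=.
under eq_bigr => x _ do under eq_bigr => p _ do
  rewrite mulrDr mulrA [_ * Rw s]mulrC -mulrA mulrA [_ * Gam s]mulrC -!mulrA.
under eq_bigr => x _ do rewrite big_split /= -!mulr_sumr sum_pathprob mulr1.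
rewrite big_split /= -mulr_sumr Psum mulr1 -mulr_sumr; congr (_ + _ * _).

by apply: eq_bigr => x _; rewrite IH.
Qed.

Lemma cvg_U s : U n s @[n --> \oo] --> Vfun P B gB g s.
Proof.
set u := fun n => U n s.
have ndu : nondecreasing_seq u by apply/nondecreasing_seqP => n; exact: U_mono.
have ubu : has_ubound (range u) by exists 1 => _ [n _ <-]; exact: U_le1.
have cu := nondecreasing_cvgn ndu ubu.
have -> : Vfun P B gB g s = sup (range u).
  rewrite /Vfun.
  have -> : (fun n => exp_tret P B gB g n s) = (fun n => u n.+1).
    by apply: funext => n; rewrite exp_tretE.
  apply: cvg_lim => //.
  by rewrite (cvg_shiftS u).
exact: cu.
Qed.

Lemma V_fix s : Vfun P B gB g s = Rw s + Gam s * \sum_(t : S) P s t * Vfun P B gB g t.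
Proof.
have h1 : (fun n => U n.+1 s) @ \oo --> Vfun P B gB g s.
  by rewrite (cvg_shiftS (fun n => U n s)); exact: cvg_U.
have h2 : (fun n => U n.+1 s) @ \oo -->
          Rw s + Gam s * \sum_(t : S) P s t * Vfun P B gB g t.
  apply: cvgD; first exact: cvg_cst.
  apply: cvgM; first exact: cvg_cst.
  apply: cvg_big => //; first exact: add_continuous.
  move=> t _; apply: cvgM; first exact: cvg_cst.
  exact: cvg_U.
exact: (cvg_unique _ h1 h2).
Qed.

Lemma U_le_V k s : U k s <= Vfun P B gB g s.
Proof.
set u := fun n => U n s.
have ndu : nondecreasing_seq u by apply/nondecreasing_seqP => n; exact: U_mono.
have := nondecreasing_cvgn_le ndu _ k.
rewrite (cvg_lim _ (cvg_U s)) //; apply.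
exact: cvg_U.
Qed.


Local Notation V := (Vfun P B gB g).
Definition D k s := V s - U k s.
Definition M k := supnorm (fun s => U k s - V s).

Lemma sup_ge (x : S -> R) s : `|x s| <= supnorm x.
Proof.
rewrite /supnorm; have := mem_index_enum s.
elim: (index_enum S) => [|a r IH] //; rewrite inE big_cons le_max.
by case/orP=> [/eqP ->|/IH ->]; rewrite ?lexx ?orbT.
Qed.

Lemma sup_ge0 (x : S -> R) : 0 <= supnorm x.
Proof.
rewrite /supnorm; apply: (big_ind (fun v => 0 <= v)) => //.
by move=> a b ha hb; rewrite le_max ha.
Qed.

Lemma sup_le (x : S -> R) c : 0 <= c -> (forall s, `|x s| <= c) -> supnorm x <= c.
Proof.
move=> c0 h; rewrite /supnorm; apply: (big_ind (fun v => v <= c)) => //.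
by move=> a b ha hb; rewrite ge_max ha hb.
Qed.

Lemma D_ge0 k s : 0 <= D k s.
Proof. by rewrite /D subr_ge0 U_le_V. Qed.

Lemma absUV k s : `|U k s - V s| = D k s.
Proof. by rewrite distrC ger0_norm // D_ge0. Qed.

Lemma D_le_M k s : D k s <= M k.
Proof. by rewrite -absUV; exact: (sup_ge (fun s => U k s - V s)). Qed.

Lemma M_ge0 k : 0 <= M k.
Proof. exact: sup_ge0. Qed.

Lemma D_step k s : D k.+1 s = Gam s * \sum_(t : S) P s t * D k t.
Proof.
rewrite /D [U k.+1 s]/= {1}V_fix.
rewrite /D; under [in RHS]eq_bigr => t _ do rewrite mulrBr.
by rewrite sumrB mulrBr opprD addrACA subrr add0r.
Qed.

Lemma U_negBR k s : s \in negB_R P B -> U k s = 0.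
Proof.
elim: k s => [|k IH] s hs //=.
rewrite /Defs.Rw (negbTE (negBR_notB hs)) add0r big1 ?mulr0 // => t _.
have := P0 s t; rewrite le_eqVlt => /orP[/eqP <-|pt]; first by rewrite mul0r.
by rewrite IH ?mulr0 // (negBR_closed hs pt).
Qed.

Lemma V_negBR s : s \in negB_R P B -> V s = 0.
Proof.
move=> hs.
have e : (fun n => U n s) = (fun _ => 0) by apply: funext => n; rewrite U_negBR.
have h : (fun n => U n s) @ \oo --> (0:R) by rewrite e; exact: cvg_cst.
exact: (cvg_unique _ (cvg_U s) h).
Qed.

Lemma D_negBR k s : s \in negB_R P B -> D k s = 0.
Proof. by move=> hs; rewrite /D V_negBR // U_negBR // subrr. Qed.

Lemma sumPD k s : \sum_(t : S) P s t * D k t <= M k.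
Proof.
rewrite -[leRHS]mul1r -(Psum s) mulr_suml; apply: ler_sum => t _.
by rewrite ler_wpM2l // D_le_M.
Qed.

Lemma sumPD_ge0 k s : 0 <= \sum_(t : S) P s t * D k t.
Proof. by apply: sumr_ge0 => t _; rewrite mulr_ge0 // D_ge0. Qed.

Lemma D_le_step k s : D k.+1 s <= M k.
Proof.
rewrite D_step; apply: le_trans (sumPD k s).
by rewrite -[leRHS]mul1r ler_wpM2r ?sumPD_ge0 ?Gam_le1.
Qed.

Lemma M_step k : M k.+1 <= M k.
Proof. by apply: sup_le; [exact: M_ge0|move=> s; rewrite absUV D_le_step]. Qed.

Lemma M_mono k k' : (k <= k')%N -> M k' <= M k.
Proof.
move/subnKC <-; elim: (k' - k)%N => [|n IH]; first by rewrite addn0.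
by rewrite addnS; apply: le_trans (M_step _) IH.
Qed.

Lemma M0 : M 0 = supnorm V.
Proof. by rewrite /M /supnorm; apply: eq_bigr => s _ /=; rewrite sub0r normrN. Qed.

Lemma part_i k : g < 1 -> M k <= g ^+ k * supnorm V.
Proof.
move=> _; rewrite -M0; elim: k => [|k IH]; first by rewrite expr0 mul1r.
have g0 : 0 <= g by apply: ltW; exact: lt_trans gBg.
apply: le_trans (_ : g * M k <= _); last by rewrite exprS -mulrA ler_wpM2l.
apply: sup_le; first by rewrite mulr_ge0 // M_ge0.
move=> s; rewrite absUV D_step.
by apply: ler_pM; rewrite ?Gam_ge0 ?sumPD_ge0 ?Gam_le_g ?sumPD.
Qed.

Section PartII.
Variable eps : R.
Hypothesis g_eq1 : g = 1.
Hypothesis eps0 : 0 < eps.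
Hypothesis eps1 : eps <= 1.
Hypothesis epsP : forall s s', 0 < P s s' -> eps <= P s s'.

Lemma baseW k s : s \in W P B -> D k.+1 s <= M k * gB.
Proof.
rewrite /W inE => /orP[sB|sR].
  rewrite D_step /Defs.Gam sB mulrC ler_wpM2r //; first exact: ltW.
  exact: sumPD.
by rewrite D_negBR // mulr_ge0 ?M_ge0 // ltW.
Qed.

Lemma claim j k s : rw P B j s -> D (k + j).+1 s <= M k * (1 - (1 - gB) * eps ^+ j).
Proof.
have gB1' := gB1.
elim: j k s => [|j IH] k s /=.
  move=> sW; have h := baseW k s sW; rewrite addn0 expr0 mulr1; apply: le_trans h _.
  by rewrite ler_wpM2l ?M_ge0 //; lra.
have ej : 0 <= eps ^+ j.+1 <= 1 by rewrite exprn_ge0 ?exprn_ile1 // ltW.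
case=> [sW|[t st rt]].
  apply: le_trans (baseW _ _ sW) _.
  have hm := M_mono _ _ (leq_addr j.+1 k); have m0 := M_ge0 k.
  have m1 := M_ge0 (k + j.+1).
  case/andP: ej => e0 e1.
  apply: le_trans (_ : M k * gB <= _); first by rewrite ler_wpM2r // ltW.
  rewrite ler_wpM2l //; nra.
rewrite addnS D_step.
set X := D (k + j).+1.
have Xt := IH k t rt.
have Xle u : X u <= M k.
  by apply: le_trans (D_le_M _ _) _; apply: M_mono; rewrite -addnS leq_addr.
have hsum : \sum_(u : S) P s u * X u <= M k - P s t * (M k - X t).
  have : P s t * (M k - X t) <= \sum_(u : S) P s u * (M k - X u).
    rewrite (bigD1 t) //= lerDl; apply: sumr_ge0 => u _.
    by rewrite mulr_ge0 // subr_ge0.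
  under [X in _ <= X -> _]eq_bigr => u _ do rewrite mulrBr.
  by rewrite sumrB -mulr_suml Psum mul1r; lra.
have hs0 : 0 <= \sum_(u : S) P s u * X u by exact: sumPD_ge0.
apply: le_trans (_ : \sum_(u : S) P s u * X u <= _).
  by rewrite -[leRHS]mul1r ler_wpM2r ?Gam_le1.
apply: le_trans hsum _.
have m0 := M_ge0 k.
have pe := epsP _ _ st.
have e0 : 0 <= eps ^+ j by rewrite exprn_ge0 // ltW.
have h1 : 0 <= M k * (1 - gB) * eps ^+ j by rewrite !mulr_ge0 // subr_ge0 ltW.
have h2 : M k * (1 - gB) * eps ^+ j <= M k - X t.
  move: Xt; rewrite -/X mulrBr mulr1 mulrA; lra.
have h3 : eps * (M k * (1 - gB) * eps ^+ j) <= P s t * (M k - X t).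
  apply: ler_pM => //; exact: ltW.
rewrite exprS; move: h3; set a := M k * (1 - gB) * eps ^+ j.
have -> : M k * (1 - (1 - gB) * (eps * eps ^+ j)) = M k - eps * a.
  by rewrite /a; ring.
lra.
Qed.


Local Notation n' := #|negB_TA P B|.
Local Notation rho := (1 - (1 - gB) * eps ^+ n').

Lemma rho_ge0 : 0 <= rho.
Proof.
have e1 : eps ^+ n' <= 1 by rewrite exprn_ile1 // ltW.
have := gB1; have := gB0; nra.
Qed.

Lemma M_block k : M (k + n'.+1) <= rho * M k.
Proof.
apply: sup_le; first by rewrite mulr_ge0 ?rho_ge0 ?M_ge0.
move=> s; rewrite absUV addnS mulrC; exact: claim (rw_all _ _ s).
Qed.

Lemma M_blocks q : M (q * n'.+1) <= rho ^+ q * supnorm V.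
Proof.
elim: q => [|q IH]; first by rewrite mul0n expr0 mul1r M0.
rewrite mulSn addnC exprS -mulrA; apply: le_trans (M_block _) _.
by rewrite ler_wpM2l ?rho_ge0.
Qed.

Lemma part_ii k : M k <= rho ^+ (k %/ n'.+1) * supnorm V.
Proof.
apply: le_trans (M_blocks _); apply: M_mono; exact: leq_trunc_div.
Qed.

End PartII.

End Aux.

Theorem theorem1 (R : realType) (S : finType) (P : S -> S -> R) (B : {set S})
    (gB g : R) :
  (forall s s', 0 <= P s s') ->
  (forall s, \sum_(s' : S) P s s' = 1) ->
  0 < gB -> gB < g -> g <= 1 ->
  [/\ (forall s, Uit P B gB g k s @[k --> \oo] --> Vfun P B gB g s),
      (g < 1 -> forall k : nat,
         supnorm (fun s => Uit P B gB g k s - Vfun P B gB g s)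
           <= g ^+ k * supnorm (Vfun P B gB g))
    & (g = 1 -> forall eps : R, 0 < eps ->
         (forall s s', 0 < P s s' -> eps <= P s s') ->
         forall k : nat,
         supnorm (fun s => Uit P B gB g k s - Vfun P B gB g s)
           <= (1 - (1 - gB) * eps ^+ #|negB_TA P B|) ^+ (k %/ #|negB_TA P B|.+1)
              * supnorm (Vfun P B gB g))].
Proof.
move=> P0 Psum gB0 gBg g1; split.
- by move=> s; exact: cvg_U.
- by move=> hg k; exact: part_i.
move=> hg eps eps0 epsP k.
case: (pickP (fun _ : S => true)) => [s0 _|none]; last first.
  by rewrite /supnorm !big_pred0 // mulr0.
have [t Pt] : exists t, 0 < P s0 t.
  case: (boolP [exists t, 0 < P s0 t]) => [/existsP //|/existsPn H].
  have : \sum_(t : S) P s0 t <= \sum_(t : S) (0:R).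
    by apply: ler_sum => t _; rewrite leNgt H.
  by rewrite Psum big1 // ler10.
have eps1 : eps <= 1.
  apply: le_trans (epsP _ _ Pt) _.
  by rewrite -(Psum s0) (bigD1 t) //= lerDl sumr_ge0.
exact: part_ii.
Qed.
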